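(* Let $H<G$ be groups with $H$ $\sigma$-co-sofic in $G$. Then $H<G$ is relatively sofic over $G$.
   Context: $H$ is co-sofic in $G$ if there exist two decreasing sequences $(G_i)$ and $(H_i)$ of subgroups of $G$ such that $\bigcap_i G_i=H$, $H_i<G_i$, $H_i\triangleleft G$, $G/H_i$ is sofic, and $G_i/H_i$ is amenable for all $i$. $H$ is $\sigma$-co-sofic in $G$ if there exist two increasing sequences $(G_i)$ and $(H_i)$ of subgroups of $G$ such that $\bigcup_i G_i=G$, $\bigcup_i H_i=H$, $H_i<G_i$, and $H_i$ is co-sofic in $G_i$ for all $i$. $H<G$ is relatively sofic over a group $K$ if there exist a sequence of inclusions of groups $(H'_i<G'_i)_{i\in\mathbb N}$ with all $G'_i$ sofic and all $H'_i$ amenable, a free ultrafilter $\omega$ on $\mathbb N$, and an embedding $\pi:G\to\prod_\omega(G'_i\times K)$ into the algebraic ultraproduct such that $\pi(G)\cap\prod_\omega(H'_i\times K)=\pi(H)$. The algebraic ultraproduct is $\prod_\omega L_i=(\prod_i L_i)/N$ with $N=\{(g_i):\{i:g_i=1\}\in\omega\}$. *)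

(* Defs.v *)
From Stdlib Require Import ClassicalEpsilon.
From Stdlib Require List.
From mathcomp Require Import all_boot all_algebra all_fingroup.
Set Implicit Arguments. Unset Strict Implicit. Unset Printing Implicit Defensive.
Import GRing.Theory Num.Theory.

Record magma := Magma {
  car :> Type;
  gmul : car -> car -> car;
  gone : car;
  ginv : car -> car }.

Arguments gmul {m}. Arguments gone {m}. Arguments ginv {m}.

Definition is_group (G : magma) : Prop :=
  (forall x y z : G, gmul x (gmul y z) = gmul (gmul x y) z) /\
  (forall x : G, gmul gone x = x) /\ (forall x : G, gmul x gone = x) /\
  (forall x : G, gmul (ginv x) x = gone) /\ (forall x : G, gmul x (ginv x) = gone).

Record subgroup (G : magma) (H : G -> Prop) : Prop := {
  sg1 : H gone;
  sgM : forall x y, H x -> H y -> H (gmul x y);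
  sgV : forall x, H x -> H (ginv x) }.

Definition normal (G : magma) (H : G -> Prop) : Prop :=
  subgroup H /\ forall g h : G, H h -> H (gmul (ginv g) (gmul h g)).

Definition sub_magma (G : magma) (H : G -> Prop) (hH : subgroup H) : magma :=
  @Magma {x : G | H x}
    (fun x y => exist _ (gmul (proj1_sig x) (proj1_sig y))
                  (sgM hH (proj2_sig x) (proj2_sig y)))
    (exist _ gone (sg1 hH))
    (fun x => exist _ (ginv (proj1_sig x)) (sgV hH (proj2_sig x))).

(* Quotient G/N: elements are the cosets gN (as predicates); operations are
   computed on (chosen) representatives.  For N normal in a group G this is the
   usual quotient group. *)
Definition coset_pred (G : magma) (N : G -> Prop) (g : G) : G -> Prop :=
  fun x => N (gmul (ginv g) x).

Definition quot_car (G : magma) (N : G -> Prop) : Type :=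
  {S : G -> Prop | exists g, S = coset_pred N g}.

Definition cls (G : magma) (N : G -> Prop) (g : G) : quot_car N :=
  exist _ (coset_pred N g) (ex_intro _ g erefl).

Definition rep (G : magma) (N : G -> Prop) (S : quot_car N) : G :=
  proj1_sig (constructive_indefinite_description _ (proj2_sig S)).

Definition quot (G : magma) (N : G -> Prop) : magma :=
  @Magma (quot_car N)
    (fun S T => cls N (gmul (rep S) (rep T)))
    (cls N gone)
    (fun S => cls N (ginv (rep S))).

Definition pair_magma (A B : magma) : magma :=
  @Magma (A * B)%type
    (fun x y => (gmul x.1 y.1, gmul x.2 y.2)) (gone, gone)
    (fun x => (ginv x.1, ginv x.2)).

Definition prod_magma (L : nat -> magma) : magma :=
  @Magma (forall i, L i)
    (fun x y i => gmul (x i) (y i)) (fun i => gone) (fun x i => ginv (x i)).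

Definition free_ultrafilter (w : (nat -> Prop) -> Prop) : Prop :=
  (forall A B : nat -> Prop, w A -> (forall n, A n -> B n) -> w B) /\
  (forall A B, w A -> w B -> w (fun n => A n /\ B n)) /\
  ~ w (fun _ => False) /\
  (forall A, w A \/ w (fun n => ~ A n)) /\
  (* free: the intersection of all members is empty *)
  (forall k : nat, exists A, w A /\ ~ A k).

Definition ultra_kernel (L : nat -> magma) (w : (nat -> Prop) -> Prop)
  : prod_magma L -> Prop := fun x => w (fun i => x i = gone).

Definition ultraprod (L : nat -> magma) (w : (nat -> Prop) -> Prop) : magma :=
  quot (@ultra_kernel L w).

Definition hdist (n : nat) (s t : 'S_n) : rat :=
  (#|[set x | s x != t x]|%:R / n%:R)%R.

Definition sofic (G : magma) : Prop :=
  forall (F : seq G) (eps : rat), (0 < eps)%R ->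
  exists (n : nat) (phi : G -> 'S_n), (0 < n)%N /\
    (forall g h, List.In g F -> List.In h F ->
        (* phi(gh) ~ phi(g) o phi(h); mathcomp's perm product s*t is "s then t" *)
        (hdist (phi (gmul g h)) ((phi h * phi g)%g) < eps)%R) /\
    (forall g, List.In g F -> g <> gone -> (1 - eps < hdist (phi g) 1%g)%R).

Definition pb (P : Prop) : bool :=
  if excluded_middle_informative P then true else false.

Definition pcount (T : Type) (P : T -> Prop) (s : seq T) : nat :=
  size (filter (fun x => pb (P x)) s).

Definition amenable (G : magma) : Prop :=
  forall (F : seq G) (eps : rat), (0 < eps)%R ->
  exists A : seq G, A <> [::] /\ List.NoDup A /\
    forall g, List.In g F ->
      (* |gA \ A| + |A \ gA| *)
      ((pcount (fun x => ~ List.In (gmul g x) A) A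
        + pcount (fun y => ~ List.In (gmul (ginv g) y) A) A)%:R
       <= eps * (size A)%:R)%R.

Definition cosofic (G : magma) (H : G -> Prop) : Prop :=
  exists (Gs Hs : nat -> G -> Prop) (hG : forall i, subgroup (Gs i)),
    (forall i x, Gs i.+1 x -> Gs i x) /\
    (forall i x, Hs i.+1 x -> Hs i x) /\
    (forall x, (forall i, Gs i x) <-> H x) /\
    (forall i x, Hs i x -> Gs i x) /\
    (forall i, normal (Hs i)) /\
    (forall i, sofic (quot (Hs i))) /\
    (forall i, amenable (quot (fun x : sub_magma (hG i) => Hs i (proj1_sig x)))).

Definition sigma_cosofic (G : magma) (H : G -> Prop) : Prop :=
  exists (Gs Hs : nat -> G -> Prop) (hG : forall i, subgroup (Gs i)),
    (forall i, subgroup (Hs i)) /\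
    (forall i x, Gs i x -> Gs i.+1 x) /\
    (forall i x, Hs i x -> Hs i.+1 x) /\
    (forall x : G, exists i, Gs i x) /\
    (forall x, (exists i, Hs i x) <-> H x) /\
    (forall i x, Hs i x -> Gs i x) /\
    (forall i, cosofic (fun x : sub_magma (hG i) => Hs i (proj1_sig x))).

Definition rel_sofic (G : magma) (H : G -> Prop) (K : magma) : Prop :=
  exists (G' : nat -> magma) (H' : forall i, G' i -> Prop)
         (w : (nat -> Prop) -> Prop),
    (forall i, is_group (G' i)) /\
    (forall i, subgroup (H' i)) /\
    (forall i, sofic (G' i)) /\
    (forall (i : nat) (hH : subgroup (H' i)), amenable (sub_magma hH)) /\
    free_ultrafilter w /\
    exists pi : G -> ultraprod (fun i => pair_magma (G' i) K) w,
      (forall g h, pi (gmul g h) = gmul (pi g) (pi h)) /\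
      (forall g h, pi g = pi h -> g = h) /\
      (* pi(G) ∩ prod_w (H'_i x K) = pi(H) *)
      (forall u, ((exists g, pi g = u) /\
                  (exists x : prod_magma (fun i => pair_magma (G' i) K),
                      (forall i, H' i (x i).1) /\ cls _ x = u))
                 <-> exists h, H h /\ pi h = u).

(* Main.v *)
Require Import Defs.
From mathcomp Require Import all_boot all_algebra all_fingroup.
From Stdlib Require Import ProofIrrelevance ClassicalEpsilon FunctionalExtensionality PropExtensionality.

Set Implicit Arguments. Unset Strict Implicit.
Lemma sig_eq (A : Type) (P : A -> Prop) (x y : sig P) :
  proj1_sig x = proj1_sig y -> x = y.
Proof. case: x => a pa; case: y => b pb /= E; subst b; f_equal; apply: proof_irrelevance. Qed.

Section Grp.
Variable M : magma.
Hypothesis hM : is_group M.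

Lemma mA (x y z : M) : gmul x (gmul y z) = gmul (gmul x y) z.
Proof. by case: hM. Qed.
Lemma m1g (x : M) : gmul gone x = x.
Proof. by case: hM => _ []. Qed.
Lemma mg1 (x : M) : gmul x gone = x.
Proof. by case: hM => _ [] _ []. Qed.
Lemma mVg (x : M) : gmul (ginv x) x = gone.
Proof. by case: hM => _ [] _ [] _ []. Qed.
Lemma mgV (x : M) : gmul x (ginv x) = gone.
Proof. by case: hM => _ [] _ [] _ []. Qed.

Lemma inv_uniq (a b : M) : gmul a b = gone -> a = ginv b.
Proof. move=> E; by rewrite -[a]mg1 -(mgV b) mA E m1g. Qed.
Lemma invK (x : M) : ginv (ginv x) = x.
Proof. by symmetry; apply: inv_uniq; rewrite mgV. Qed.
Lemma invM (x y : M) : ginv (gmul x y) = gmul (ginv y) (ginv x).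
Proof.
symmetry; apply: inv_uniq.
by rewrite -mA (mA (ginv x)) mVg m1g mVg.
Qed.
Lemma inv1 : ginv (gone : M) = gone.
Proof. by symmetry; apply: inv_uniq; rewrite m1g. Qed.
Lemma mKg (x y : M) : gmul (ginv x) (gmul x y) = y.
Proof. by rewrite mA mVg m1g. Qed.
Lemma mKVg (x y : M) : gmul x (gmul (ginv x) y) = y.
Proof. by rewrite mA mgV m1g. Qed.
Lemma mcancel (x y z : M) : gmul x y = gmul x z -> y = z.
Proof. by move=> E; rewrite -(mKg x y) E mKg. Qed.

Variable N : M -> Prop.
Hypothesis hN : Defs.normal N.

Lemma nsub : subgroup N. Proof. by case: hN. Qed.
Lemma nconj g h : N h -> N (gmul (ginv g) (gmul h g)). Proof. by case: hN => _ hc; apply: hc. Qed.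
Lemma nM x y : N x -> N y -> N (gmul x y). Proof. move=> a b; exact: (sgM nsub a b). Qed.
Lemma nV x : N x -> N (ginv x). Proof. move=> a; exact: (sgV nsub a). Qed.
Lemma n1 : N gone. Proof. exact: sg1 nsub. Qed.

Lemma cls_eq (a b : M) : N (gmul (ginv a) b) -> cls N a = cls N b.
Proof.
move=> Nab; apply: sig_eq => /=; apply: functional_extensionality => x.
apply: propositional_extensionality; rewrite /coset_pred; split => h.
- have := nM (nV Nab) h. by rewrite invM invK -mA mKVg.
- have := nM Nab h. by rewrite -mA mKVg.
Qed.

Lemma cls_eqP (a b : M) : cls N a = cls N b -> N (gmul (ginv a) b).
Proof.
move=> E; have : coset_pred N b b by rewrite /coset_pred mVg; exact: n1.
have -> : coset_pred N b = coset_pred N a by have := f_equal (@proj1_sig _ _) E.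
done.
Qed.

Lemma cls_rep (S : quot_car N) : cls N (rep S) = S.
Proof.
apply: sig_eq => /=; rewrite /rep.
by case: (constructive_indefinite_description _ _) => g /= ->.
Qed.

Lemma rep_cls (a : M) : N (gmul (ginv (rep (cls N a))) a).
Proof. by apply: cls_eqP; rewrite cls_rep. Qed.

Lemma clsM (a b : M) : @gmul (quot N) (cls N a) (cls N b) = cls N (gmul a b).
Proof.
rewrite /=; apply: cls_eq.
set ra := rep (cls N a); set rb := rep (cls N b).
have Ha : N (gmul (ginv ra) a) := rep_cls a.
have Hb : N (gmul (ginv rb) b) := rep_cls b.
have := nM (nconj rb Ha) Hb.
by rewrite invM -!mA mKVg.
Qed.

Lemma clsV (a : M) : @ginv (quot N) (cls N a) = cls N (ginv a).
Proof.
rewrite /=; apply: cls_eq.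
set ra := rep (cls N a).
have Ha : N (gmul (ginv ra) a) := rep_cls a.
have := nconj (ginv a) (nV Ha).
by rewrite invK invM invK -mA mKVg.
Qed.

Lemma quot_ind (P : quot N -> Prop) : (forall a, P (cls N a)) -> forall S, P S.
Proof. by move=> h S; rewrite -(cls_rep S). Qed.

Lemma quot_group : is_group (quot N).
Proof.
have c1 : (@gone (quot N)) = cls N gone by [].
split; [|split; [|split; [|split]]].
- apply: quot_ind => a; apply: quot_ind => b; apply: quot_ind => c.
  by rewrite !clsM mA.
- by apply: quot_ind => a; rewrite c1 clsM m1g.
- by apply: quot_ind => a; rewrite c1 clsM mg1.
- by apply: quot_ind => a; rewrite clsV clsM mVg.
- by apply: quot_ind => a; rewrite clsV clsM mgV.
Qed.

End Grp.

Lemma sub_group (M : magma) (K : M -> Prop) (hK : subgroup K) :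
  is_group M -> is_group (sub_magma hK).
Proof.
move=> hM; split; [|split; [|split; [|split]]] => *; apply: sig_eq => /=.
- exact: mA.
- exact: m1g.
- exact: mg1.
- exact: mVg.
- exact: mgV.
Qed.

Lemma pb_iff (P Q : Prop) : (P <-> Q) -> pb P = pb Q.
Proof.
rewrite /pb => h; case: (excluded_middle_informative P) => p; case: (excluded_middle_informative Q) => q //; exfalso; tauto.
Qed.

Lemma pcount_map (A B : Type) (f : A -> B) (P : B -> Prop) s :
  pcount P (map f s) = pcount (fun x => P (f x)) s.
Proof. by rewrite /pcount filter_map size_map. Qed.

Lemma In_map_inj (A B : Type) (f : A -> B) s x :
  injective f -> List.In (f x) (map f s) <-> List.In x s.
Proof.
move=> fi; elim: s => [|y s IH] //=; split.
- case=> [/fi ->|/IH]; tauto.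
- case=> [->|/IH]; tauto.
Qed.

Lemma In_map (A B : Type) (f : A -> B) s x :
  List.In x s -> List.In (f x) (map f s).
Proof. elim: s => [|y s IH] //= [->|/IH]; tauto. Qed.

Lemma NoDup_map_inj (A B : Type) (f : A -> B) s :
  injective f -> List.NoDup s -> List.NoDup (map f s).
Proof.
move=> fi; elim: s => [|y s IH] /=; first by constructor.
move=> h; inversion h; subst; constructor; last exact: IH.
by rewrite In_map_inj.
Qed.

Lemma amen_transfer (A B : magma) (f : A -> B) :
  (forall x y, f (gmul x y) = gmul (f x) (f y)) ->
  (forall x, f (ginv x) = ginv (f x)) -> injective f ->
  (forall b, exists a, f a = b) -> amenable A -> amenable B.
Proof.
move=> fM fV fi fs amA F eps eps0.
pose finv b := proj1_sig (constructive_indefinite_description _ (fs b)).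
have finvK b : f (finv b) = b by rewrite /finv; case: (constructive_indefinite_description _ _).
have [A' [A0 [ND HA]]] := amA (map finv F) eps eps0.
exists (map f A'); split; first by move: A0; case: {ND HA} A'.
split; first exact: NoDup_map_inj.
move=> g gF; have := HA _ (In_map finv gF).
rewrite !pcount_map size_map.
have -> : pcount (fun x => ~ List.In (gmul g (f x)) (map f A')) A' =
          pcount (fun x => ~ List.In (gmul (finv g) x) A') A'.
  rewrite /pcount; congr size; apply: eq_filter => x; apply: pb_iff.
  by rewrite -{1}(finvK g) -fM In_map_inj.
have -> : pcount (fun x => ~ List.In (gmul (ginv g) (f x)) (map f A')) A' =
          pcount (fun x => ~ List.In (gmul (ginv (finv g)) x) A') A'.
  rewrite /pcount; congr size; apply: eq_filter => x; apply: pb_iff.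
  by rewrite -{1}(finvK g) -fV -fM In_map_inj.
done.
Qed.

Section Iso.
Variable M : magma.
Hypothesis hM : is_group M.
Variable N : M -> Prop.
Hypothesis hN : Defs.normal N.
Variable K : M -> Prop.
Hypothesis hK : subgroup K.
Hypothesis NK : forall x, N x -> K x.

Lemma K_rep a : K a -> K (rep (cls N a)).
Proof.
move=> Ka; have h := nV hN (rep_cls hM hN a).
rewrite (invM hM) (invK hM) in h.
have := sgM hK Ka (NK h); by rewrite (mKVg hM).
Qed.

Definition Ms := sub_magma hK.
Definition Ns : Ms -> Prop := fun x => N (proj1_sig x).

Lemma Ms_group : is_group Ms. Proof. exact: sub_group. Qed.
Lemma Ns_normal : Defs.normal Ns.
Proof.
split; first split.
- exact: (n1 hN).
- move=> x y; exact: (nM hN).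
- move=> x; exact: (nV hN).
- move=> g h; exact: (nconj hN).
Qed.

Variable hH : subgroup (fun T : quot N => K (rep T)).

Definition fiso (T : quot Ns) : sub_magma hH :=
  exist _ (cls N (proj1_sig (rep T))) (K_rep (proj2_sig (rep T))).

Lemma fisoE s : proj1_sig (fiso (cls Ns s)) = cls N (proj1_sig s).
Proof. rewrite /=; apply: (cls_eq hM hN); exact: (rep_cls Ms_group Ns_normal s). Qed.

Lemma amen_iso : amenable (quot Ns) -> amenable (sub_magma hH).
Proof.
apply: (@amen_transfer _ _ fiso).
- apply: (quot_ind (N:=Ns)) => a; apply: (quot_ind (N:=Ns)) => b.
  apply: sig_eq; rewrite (clsM Ms_group Ns_normal) fisoE.
  have -> : proj1_sig (gmul (fiso (cls Ns a)) (fiso (cls Ns b))) =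
     @gmul (quot N) (proj1_sig (fiso (cls Ns a))) (proj1_sig (fiso (cls Ns b))) by [].
  by rewrite !fisoE (clsM hM hN).
- apply: (quot_ind (N:=Ns)) => a.
  apply: sig_eq; rewrite (clsV Ms_group Ns_normal) fisoE.
  have -> : proj1_sig (ginv (fiso (cls Ns a))) =
     @ginv (quot N) (proj1_sig (fiso (cls Ns a))) by [].
  by rewrite !fisoE (clsV hM hN).
- move=> T1 T2; move: T1 T2; apply: (quot_ind (N:=Ns)) => a; apply: (quot_ind (N:=Ns)) => b.
  move=> E; have := f_equal (@proj1_sig _ _) E; rewrite !fisoE => /(cls_eqP hM hN) h.
  exact: (cls_eq Ms_group Ns_normal).
- move=> [S pS]; exists (cls Ns (exist _ (rep S) pS)); apply: sig_eq.
  by rewrite fisoE /= cls_rep.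
Qed.
End Iso.

Lemma prod_group (L : nat -> magma) : (forall i, is_group (L i)) -> is_group (prod_magma L).
Proof.
move=> hL; split; [|split; [|split; [|split]]] => *; apply: functional_extensionality_dep => i /=.
- exact: mA.
- exact: m1g.
- exact: mg1.
- exact: mVg.
- exact: mgV.
Qed.

Lemma pair_group (A B : magma) : is_group A -> is_group B -> is_group (pair_magma A B).
Proof.
move=> hA hB; split; [|split; [|split; [|split]]].
- by move=> [? ?] [? ?] [? ?]; rewrite /= !mA.
- by move=> [? ?]; rewrite /= !m1g.
- by move=> [? ?]; rewrite /= !mg1.
- by move=> [? ?]; rewrite /= !mVg.
- by move=> [? ?]; rewrite /= !mgV.
Qed.

Section Ultra.
Variable w : (nat -> Prop) -> Prop.
Hypothesis hw : free_ultrafilter w.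

Lemma wS (A B : nat -> Prop) : w A -> (forall n, A n -> B n) -> w B.
Proof. by case: hw => h _; apply: h. Qed.
Lemma wI (A B : nat -> Prop) : w A -> w B -> w (fun n => A n /\ B n).
Proof. by case: hw => _ [h _]; apply: h. Qed.
Lemma wF : ~ w (fun _ => False).
Proof. by case: hw => _ [_ [h _]]. Qed.
Lemma wT : w (fun _ => True).
Proof. case: hw => _ [_ [_ [h _]]]; case: (h (fun _ => True)) => // h2. exact: (wS h2 (fun _ _ => I)). Qed.
Lemma wex (A : nat -> Prop) : w A -> exists n, A n.
Proof.
move=> wA; apply: NNPP => ne; apply: wF; apply: (wS wA) => n An; apply: ne; by exists n.
Qed.

Variable L : nat -> magma.
Hypothesis hL : forall i, is_group (L i).

Lemma uk_normal : Defs.normal (@ultra_kernel L w).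
Proof.
rewrite /ultra_kernel; split; first split.
- exact: (wS wT (fun _ _ => erefl)).
- move=> x y hx hy; apply: (wS (wI hx hy)) => n [/= -> ->]; exact: (m1g (hL n)).
- move=> x hx; apply: (wS hx) => n /= ->; exact: (inv1 (hL n)).
- move=> g h hh; apply: (wS hh) => n /= ->; by rewrite (m1g (hL n)) (mVg (hL n)).
Qed.

Lemma ucls_eq (x y : prod_magma L) : w (fun n => x n = y n) -> cls (@ultra_kernel L w) x = cls (@ultra_kernel L w) y.
Proof.
move=> h; apply: (cls_eq (prod_group hL) uk_normal); rewrite /ultra_kernel.
by apply: (wS h) => n /= ->; rewrite (mVg (hL n)).
Qed.

Lemma ucls_eqP (x y : prod_magma L) : cls (@ultra_kernel L w) x = cls (@ultra_kernel L w) y -> w (fun n => x n = y n).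
Proof.
move=> /(cls_eqP (prod_group hL) uk_normal); rewrite /ultra_kernel => h.
apply: (wS h) => n /= E.
by rewrite -(mKVg (hL n) (x n) (y n)) E (mg1 (hL n)).
Qed.
End Ultra.

Lemma K_rep_inv (M : magma) (hM : is_group M) (N : M -> Prop) (hN : Defs.normal N)
  (K : M -> Prop) (hK : subgroup K) (NK : forall x, N x -> K x) a :
  K (rep (cls N a)) -> K a.
Proof.
move=> Kr; have h := rep_cls hM hN a.
have := sgM hK Kr (NK _ h); by rewrite (mKVg hM).
Qed.

Lemma K_rep_iff (M : magma) (hM : is_group M) (N : M -> Prop) (hN : Defs.normal N)
  (K : M -> Prop) (hK : subgroup K) (NK : forall x, N x -> K x) a :
  K (rep (cls N a)) <-> K a.
Proof. split; [exact: K_rep_inv | exact: K_rep]. Qed.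
From mathcomp Require Import boolp classical_sets filter.
From Stdlib Require Import Cantor.
Definition pi1 n := (Cantor.of_nat n).1.
Definition pi2 n := (Cantor.of_nat n).2.

Definition Bset (kf : nat * (nat -> nat)) : set nat :=
  fun n => (kf.1 <= pi1 n)%N /\ (kf.2 (pi1 n) <= pi2 n)%N.

Lemma exists_w : exists w, free_ultrafilter w /\
  forall k f, w (fun n => (k <= pi1 n)%N /\ (f (pi1 n) <= pi2 n)%N).
Proof.
have FF : Filter (filter_from setT Bset).
  apply: filter_fromT_filter; first by exists (0%N, fun _ => 0%N).
  move=> [k1 f1] [k2 f2]; exists (maxn k1 k2, fun i => maxn (f1 i) (f2 i)).
  move=> n [/= h1 h2]; rewrite /Bset /=.
  move: h1 h2; rewrite !geq_max => /andP[a b] /andP[c d]; by split; split.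
have PF : ProperFilter (filter_from setT Bset).
  apply: filter_from_proper => -[k f] _.
  exists (Cantor.to_nat (k, f k)); rewrite /Bset /pi1 /pi2 Cantor.cancel_of_to /=.
  by split.
have [U [UU sub]] := ultraFilterLemma PF.
exists (fun A => U A); split; last first.
  by move=> k f; apply: sub; exists (k, f).
split; first by move=> A B UA AB; apply: filterS UA => x /AB.
split; first by move=> A B UA UB; apply: filterI.
split; first by move=> h; apply: (filter_not_empty U).
split; first by move=> A; case: (in_ultra_setVsetC A UU) => h; [left|right].
move=> k; exists (fun n => (pi1 k).+1 <= pi1 n)%N; split.
  by apply: sub; exists ((pi1 k).+1, fun _ => 0%N) => // n [].
by rewrite ltnn.
Qed.

Unset Implicit Arguments.
Section Main.
Variable G : magma.
Hypothesis hGg : is_group G.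
Variable H : G -> Prop.
Variables Gs Hs : nat -> G -> Prop.
Variable hG : forall i, subgroup (Gs i).
Hypothesis GsI : forall i x, Gs i x -> Gs i.+1 x.
Hypothesis HsI : forall i x, Hs i x -> Hs i.+1 x.
Hypothesis Gcov : forall x, exists i, Gs i x.
Hypothesis Hchar : forall x, (exists i, Hs i x) <-> H x.
Hypothesis HsG : forall i x, Hs i x -> Gs i x.
Variables Gs' Hs' : forall i, nat -> sub_magma (hG i) -> Prop.
Variable hG' : forall i j, subgroup (Gs' i j).
Hypothesis GsD : forall i j x, Gs' i j.+1 x -> Gs' i j x.
Hypothesis Gchar : forall i x, (forall j, Gs' i j x) <-> Hs i (proj1_sig x).
Hypothesis HsG' : forall i j x, Hs' i j x -> Gs' i j x.
Hypothesis Hnorm : forall i j, Defs.normal (Hs' i j).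
Hypothesis Hsof : forall i j, sofic (quot (Hs' i j)).
Hypothesis Hamen : forall i j,
  amenable (quot (fun x : sub_magma (hG' i j) => Hs' i j (proj1_sig x))).
Variable w : (nat -> Prop) -> Prop.
Hypothesis hw : free_ultrafilter w.
Hypothesis hB : forall k f, w (fun n => (k <= pi1 n)%N /\ (f (pi1 n) <= pi2 n)%N).

Lemma Gs_le i i' x : (i <= i')%N -> Gs i x -> Gs i' x.
Proof.
move=> /subnKC <-; elim: (i' - i)%N => [|m IH]; first by rewrite addn0.
by move=> /IH; rewrite addnS; apply: GsI.
Qed.
Lemma Hs_le i i' x : (i <= i')%N -> Hs i x -> Hs i' x.
Proof.
move=> /subnKC <-; elim: (i' - i)%N => [|m IH]; first by rewrite addn0.
by move=> /IH; rewrite addnS; apply: HsI.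
Qed.
Lemma Gs'_le i j j' x : (j <= j')%N -> Gs' i j' x -> Gs' i j x.
Proof.
move=> /subnKC <-; elim: (j' - j)%N => [|m IH]; first by rewrite addn0.
by rewrite addnS => /GsD /IH.
Qed.

Definition S i := sub_magma (hG i).
Lemma S_group i : is_group (S i). Proof. exact: sub_group. Qed.
Definition NN n : S (pi1 n) -> Prop := Hs' (pi1 n) (pi2 n).
Definition G' n : magma := quot (NN n).
Definition H' n : G' n -> Prop := fun T => Gs' (pi1 n) (pi2 n) (rep T).
Definition psi n (g : G) : G' n :=
  match excluded_middle_informative (Gs (pi1 n) g) with
  | left p => cls (NN n) (exist _ g p)
  | right _ => gone end.
Definition L n := pair_magma (G' n) G.
Definition xg (g : G) : prod_magma L := fun n => (psi n g, g).
Definition piG (g : G) : ultraprod L w := cls (@ultra_kernel L w) (xg g).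

Lemma G'_group n : is_group (G' n).
Proof. exact: (quot_group (S_group _) (Hnorm _ _)). Qed.
Lemma L_group n : is_group (L n).
Proof. exact: (pair_group (G'_group n) hGg). Qed.

Lemma psiE n g (p : Gs (pi1 n) g) : psi n g = cls (NN n) (exist _ g p).
Proof.
rewrite /psi; case: (excluded_middle_informative _) => [p'|np]; last by [].
by congr cls; apply: sig_eq.
Qed.

Lemma H'E n a : H' n (cls (NN n) a) <-> Gs' (pi1 n) (pi2 n) a.
Proof. exact: (K_rep_iff (S_group _) (Hnorm _ _) (hG' _ _) (HsG' _ _) a). Qed.

Lemma H'_sub n : subgroup (H' n).
Proof.
split.
- have -> : (gone : G' n) = cls (NN n) gone by [].
  by apply/H'E; exact: (sg1 (hG' _ _)).
- move=> x y; rewrite -(cls_rep x) -(cls_rep y) (clsM (S_group _) (Hnorm _ _)) !H'E.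
  exact: (sgM (hG' _ _)).
- move=> x; rewrite -(cls_rep x) (clsV (S_group _) (Hnorm _ _)) !H'E.
  exact: (sgV (hG' _ _)).
Qed.

Lemma ev g : exists k, forall n, (k <= pi1 n)%N -> Gs (pi1 n) g.
Proof. have [k hk] := Gcov g; exists k => n kn; exact: Gs_le hk. Qed.

Lemma wk k : w (fun n => (k <= pi1 n)%N).
Proof. exact: (wS hw (hB k (fun _ => 0%N)) (fun n h => proj1 h)). Qed.

Lemma psiM n g h : Gs (pi1 n) g -> Gs (pi1 n) h ->
  psi n (gmul g h) = gmul (psi n g) (psi n h).
Proof.
move=> pg ph; rewrite (psiE _ _ pg) (psiE _ _ ph) (psiE _ _ (sgM (hG _) pg ph)).
rewrite (clsM (S_group _) (Hnorm _ _)); congr cls; exact: sig_eq.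
Qed.

Lemma piM g h : piG (gmul g h) = gmul (piG g) (piG h).
Proof.
rewrite /piG (clsM (prod_group L_group) (uk_normal hw L_group)).
apply: (ucls_eq hw L_group).
have [k1 h1] := ev g; have [k2 h2] := ev h.
apply: (wS hw (wk (maxn k1 k2))) => n; rewrite geq_max => /andP[a b].
by rewrite /xg /= psiM //; [apply: h1 | apply: h2].
Qed.

Lemma piI g h : piG g = piG h -> g = h.
Proof.
move=> /(ucls_eqP hw L_group) /(wex hw) [n E].
by have := f_equal snd E.
Qed.

Lemma piChar u :
  ((exists g, piG g = u) /\
   (exists x : prod_magma L, (forall i, H' i (x i).1) /\ cls _ x = u))
  <-> exists h, H h /\ piG h = u.
Proof.
split.
- move=> [[g <-] [x [xH ex]]]; exists g; split => //.
  have W1 : w (fun n => H' n (psi n g)).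
    apply: (wS hw (ucls_eqP hw L_group ex)) => n E.
    by have := xH n; rewrite E.
  apply: NNPP => nH.
  have [k hk] := Gcov g.
  have P : forall i, (k <= i)%N -> exists j, forall p : Gs i g, ~ Gs' i j (exist _ g p : S i).
    move=> i ki; have p0 : Gs i g := Gs_le k i g ki hk.
    have nHs : ~ Hs i g := fun h => nH (proj1 (Hchar g) (ex_intro _ i h)).
    have : ~ forall j, Gs' i j (exist _ g p0 : S i).
      by move=> /(proj1 (Gchar i (exist _ g p0 : S i))).
    move=> /not_all_ex_not [j hj]; exists j => p.
    by have -> : (exist _ g p : S i) = (exist _ g p0 : S i) by apply: sig_eq.
  pose f i := match excluded_middle_informative
      (exists j, forall p : Gs i g, ~ Gs' i j (exist _ g p : S i)) with
    | left e => proj1_sig (ClassicalEpsilon.constructive_indefinite_description _ e)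
    | right _ => 0%N end.
  have fP : forall i, (k <= i)%N -> forall p : Gs i g, ~ Gs' i (f i) (exist _ g p : S i).
    move=> i ki; rewrite /f; case: (excluded_middle_informative _) => [e|ne].
      by case: (ClassicalEpsilon.constructive_indefinite_description _ e).
    by case: ne; apply: P.
  have [n [h1 [h2 h3]]] := wex hw (wI hw W1 (hB k f)).
  have pn : Gs (pi1 n) g := Gs_le k _ g h2 hk.
  rewrite (psiE _ _ pn) in h1; move/H'E in h1.
  apply: (fP _ h2 pn); exact: (Gs'_le _ _ _ _ h3 h1).
- move=> [h [Hh <-]]; split; first by exists h.
  have [k0 hk0] := proj2 (Hchar h) Hh.
  have W : w (fun n => H' n (psi n h)).
    apply: (wS hw (wk k0)) => n kn.
    have hs : Hs (pi1 n) h := Hs_le k0 _ h kn hk0.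
    have pn := HsG _ _ hs.
    rewrite (psiE _ _ pn); apply/H'E.
    exact: (proj2 (Gchar _ (exist _ h pn : S (pi1 n))) hs (pi2 n)).
  pose x : prod_magma L := fun n =>
    match excluded_middle_informative (H' n (psi n h)) with
    | left _ => xg h n | right _ => (gone, h) end.
  exists x; split.
  + move=> n; rewrite /x; case: (excluded_middle_informative _) => // _.
    exact: (sg1 (H'_sub n)).
  + apply: (ucls_eq hw L_group); apply: (wS hw W) => n hn; rewrite /x.
    by case: (excluded_middle_informative _).
Qed.

Lemma main_rel : rel_sofic H G.
Proof.
exists G', H', w; split; first exact: G'_group.
split; first exact: H'_sub.
split; first by move=> n; exact: Hsof.
split.
  move=> n hH; apply: (@amen_iso _ (S_group _) _ (Hnorm _ _) _ (hG' (pi1 n) (pi2 n)) (HsG' _ _)).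
  exact: (Hamen (pi1 n) (pi2 n)).
split; first exact: hw.
exists piG; split; first exact: piM.
split; first exact: piI.
exact: piChar.
Qed.

End Main.

Theorem corollary2p19 (G : magma) (H : G -> Prop) :
  is_group G -> subgroup H -> sigma_cosofic H -> rel_sofic H G.
Proof.
move=> hGg _ [Gs [Hs [hG [hHs [GsI [HsI [Gcov [Hchar [HsG cos]]]]]]]]].
have [w [hw hB]] := exists_w.
pose c1 i := ClassicalEpsilon.constructive_indefinite_description _ (cos i).
pose Gs' i := proj1_sig (c1 i).
pose c2 i := ClassicalEpsilon.constructive_indefinite_description _ (proj2_sig (c1 i)).
pose Hs' i := proj1_sig (c2 i).
have spec i := proj2_sig (c2 i).
have hG' : forall i j, subgroup (Gs' i j).
  by move=> i j; case: (spec i) => hg _; exact: hg.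
apply: (@main_rel G hGg H Gs Hs hG GsI HsI Gcov Hchar HsG Gs' Hs' hG' _ _ _ _ _ _ w hw hB).
- by move=> i; case: (spec i) => hg [D _].
- by move=> i; case: (spec i) => hg [D [Hd [C _]]].
- by move=> i; case: (spec i) => hg [D [Hd [C [HG _]]]].
- by move=> i; case: (spec i) => hg [D [Hd [C [HG [N _]]]]].
- by move=> i; case: (spec i) => hg [D [Hd [C [HG [N [Sf _]]]]]].
- move=> i j; case: (spec i) => hg [D [Hd [C [HG [N [Sf Am]]]]]].
  rewrite (proof_irrelevance _ (hG' i j) (hg j)); exact: Am.
Qed.
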